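(* Let $k\geq 3$ be an integer, let $G$ be a graph, and let $G'$ be the graph obtained from $G$ by the $k$-edge-gadget transformation (with respect to any choice of orientations). Then every $k$-partial $k$-coloring $\gamma$ of $G'$ satisfies $\gamma(u)\neq\gamma(v)$ for every edge $\{u,v\}\in E(G)$.
   Context: A $k$-partial $c$-coloring of a graph $G=(V,E)$ is a map $\gamma:V\to\{1,\dots,c\}$ such that every vertex $v$ has at least $\min\{k,\deg_G(v)\}$ neighbors $u$ with $\gamma(u)\neq\gamma(v)$. The $k$-edge-gadget transformation: given a graph $G$ and, for each edge $\{u,v\}\in E(G)$, a fixed choice of ordered pair $(u,v)$, the graph $G'$ is obtained from $G$ by keeping all vertices of $G$, deleting every edge $\{u,v\}$ of $G$, and for each such edge adding $k$ new vertices $(u,v,1),\dots,(u,v,k)$ that form a clique $K_k$, together with the edges $\{u,(u,v,j)\}$ for $j=1,\dots,k-1$ and the edge $\{v,(u,v,k)\}$. (The gadget vertices of distinct edges are distinct.) *)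

(* Defs.v *)
From mathcomp Require Import all_boot.
Set Implicit Arguments. Unset Strict Implicit. Unset Printing Implicit Defensive.

Definition simple_graph (T : finType) (adj : rel T) :=
  symmetric adj /\ irreflexive adj.

Definition deg (T : finType) (adj : rel T) (x : T) : nat := #|[set y | adj x y]|.

(* k-partial c-coloring: colours 1..c are represented by 'I_c. *)
Definition partial_coloring (T : finType) (adj : rel T) (k c : nat)
    (gamma : T -> 'I_c) : Prop :=
  forall x : T,
    minn k (deg adj x) <= #|[set y | adj x y & gamma y != gamma x]|.

(* An orientation of the edges of G: for every edge {u,v} exactly one of
   o u v, o v u holds; o u v means the chosen ordered pair is (u,v). *)
Definition orientation (V : finType) (e : rel V) (o : rel V) : Prop :=
  forall u v, e u v -> o u v = ~~ o v u.

Section Gadget.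
Variables (V : finType) (e : rel V) (o : rel V) (k : nat).

(* Gadget vertex (u,v,j+1), j : 'I_k, for every oriented edge (u,v). *)
Definition gadget_pred (x : V * V * 'I_k) : bool := e x.1.1 x.1.2 && o x.1.1 x.1.2.
Definition gadget_vertex := {x : V * V * 'I_k | gadget_pred x}.

Definition gvert := (V + gadget_vertex)%type.

Definition orig_gadget_adj (a : V) (x : gadget_vertex) : bool :=
  let: (u, v, j) := val x in
  ((a == u) && (j.+1 < k)) || ((a == v) && (j.+1 == k)).

Definition gadj (x y : gvert) : bool :=
  match x, y with
  | inl _, inl _ => false
  | inl a, inr g => orig_gadget_adj a g
  | inr g, inl a => orig_gadget_adj a g
  | inr g, inr h => ((val g).1 == (val h).1) && (g != h)
  end.
End Gadget.

(* Main.v *)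
Require Import Defs.
From mathcomp Require Import all_boot.

Section Aux.
Variables (V : finType) (e : rel V) (o : rel V) (k : nat).

Lemma deg_gadget (x : gadget_vertex e o k) :
  #|[set y | @gadj V e o k (inr x) y]| <= k.
Proof.
case: x => [[[u v] j] px].
set x : gadget_vertex e o k := exist _ (u, v, j) px.
pose a0 := if j.+1 < k then u else v.
pose A := [set y : gvert e o k | if y is inr h then (val h).1 == (u, v) else false].
have sub : [set y | @gadj V e o k (inr x) y] \subset inl a0 |: (A :\ inr x).
  apply/subsetP => y; rewrite !inE; case: y => [a|h] /=.
    rewrite /orig_gadget_adj /= /a0.
    case: ifP => hj /=.
      have hj' : (j.+1 == k) = false by apply/negbTE; rewrite neq_ltn hj.
      by rewrite hj' !andbF orbF andbT => /eqP ->; rewrite eqxx.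
    by rewrite andbF /= => /andP [/eqP -> _]; rewrite eqxx.
  move=> /andP [/eqP <- hx]; rewrite eqxx andbT; apply/eqP => -[E]; by rewrite E eqxx in hx.
have hA : #|A| <= k.
  have := @leq_card_in _ _ (fun y : gvert e o k => if y is inr h then (val h).2 else j) (mem A).
  rewrite card_ord; apply => y1 y2; rewrite !inE.
  case: y1 => [//|[[[a1 b1] j1] p1]]; case: y2 => [//|[[[a2 b2] j2] p2]] /=.
  move=> /eqP [E1 E2] /eqP [E3 E4] ej; subst; congr inr; apply: val_inj => /=.
  by [].
have xA : inr x \in A by rewrite inE.
move: hA; rewrite (cardsD1 (inr x) A) xA add1n => hA.
apply: leq_trans (subset_leq_card sub) _.
apply: leq_trans (leq_card_setU _ _) _.
by rewrite cards1 add1n.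
Qed.

Lemma gadget_proper (gamma : gvert e o k -> 'I_k)
  (hgamma : @partial_coloring (gvert e o k) (@gadj V e o k) k k gamma)
  (x : gadget_vertex e o k) y :
  @gadj V e o k (inr x) y -> gamma y != gamma (inr x).
Proof.
move=> hxy.
have hd := deg_gadget x.
have := hgamma (inr x); rewrite /deg (minn_idPr hd) => hc.
set N := [set y | _] in hd hc.
set D := [set y | _ & _] in hc.
have sDN : D \subset N by apply/subsetP => z; rewrite !inE => /andP [].
have eDN : D = N by apply/eqP; rewrite eqEcard sDN hc.
have : y \in D by rewrite eDN inE.
by rewrite inE => /andP [].
Qed.
End Aux.

Theorem lemma2 (k : nat) (hk : 3 <= k) (V : finType) (e : rel V)
  (hG : simple_graph e) (o : rel V) (ho : orientation e o)
  (gamma : gvert e o k -> 'I_k)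
  (hgamma : @partial_coloring (gvert e o k) (@gadj V e o k) k k gamma) :
  forall u v : V, e u v -> gamma (inl u) != gamma (inl v).
Proof.
have main : forall u v : V, e u v -> o u v -> gamma (inl u) != gamma (inl v).
  move=> u v euv ouv.
  have huv : u != v by apply/eqP => E; move: euv; rewrite E (proj2 hG v).
  have pj : forall j : 'I_k, gadget_pred e o (u, v, j) by move=> j; rewrite /gadget_pred /= euv ouv.
  pose mk (j : 'I_k) : gadget_vertex e o k := exist _ (u, v, j) (pj j).
  pose g j := gamma (inr (mk j)).
  have ginj : injective g.
    move=> i j gij; apply/eqP; apply/negPn/negP => nij.
    have := @gadget_proper V e o k gamma hgamma (mk i) (inr (mk j)).
    rewrite /= eqxx /=; rewrite -/(g j) -/(g i) gij eqxx; move=> H; suff hne : mk i != mk j by move: (H hne).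
    apply/negP => /eqP /(congr1 val) /= [] EE; by rewrite EE eqxx in nij.
  have := inj_card_onto ginj (leqnn _) (gamma (inl u)).
  case/codomP => j hj.
  have [hjk | hjk] := ltnP j.+1 k.
    have := @gadget_proper V e o k gamma hgamma (mk j) (inl u).
    by rewrite /= /orig_gadget_adj /= eqxx hjk /= hj /g eqxx => /(_ isT).
  have ejk : j.+1 == k by rewrite eqn_leq hjk ltn_ord.
  have := @gadget_proper V e o k gamma hgamma (mk j) (inl v).
  rewrite /= /orig_gadget_adj /= eqxx ejk orbT => /(_ isT).
  by rewrite -/(g j) -hj eq_sym.
move=> u v euv.
case ouv : (o u v); first exact: main.
have evu : e v u by rewrite (proj1 hG).
have ovu : o v u by rewrite (ho v u evu) ouv.
by rewrite eq_sym; apply: main.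
Qed.
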